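(* For every integer $n\ge 1$, the origami flip graph ${\rm OFG}(M_{2,n})$ of the $2\times n$ Miura-ori has exactly $2\cdot 3^{n-1}$ vertices.
   Context: The $2\times n$ Miura-ori $M_{2,n}$ ($n\ge 1$) is the crease pattern made of $2$ rows and $n$ columns of congruent parallelograms, with faces $\alpha_{i,j}$ ($i\in\{1,2\}$ the row, $j\in\{1,\dots,n\}$ the column). Its interior vertices are $x_1,\dots,x_{n-1}$ (on the middle line, left to right) and its creases are $e_0$ together with $e_{3k-1},e_{3k},e_{3k+1}$ for $k=1,\dots,n-1$ (so $3n-2$ creases; we write $e_0$ also as $e_{3\cdot 1-3}$). At $x_k$ the incident creases are: left $e_{3k-3}$, top $e_{3k-1}$, right $e_{3k}$, bottom $e_{3k+1}$; the two sector angles adjacent to the left crease are obtuse, the other two are acute. Face $\alpha_{1,j}$ is bordered by those of $e_{3j-4}$ (present iff $j\ge2$), $e_{3j-3}$, $e_{3j-1}$ (present iff $j\le n-1$); face $\alpha_{2,j}$ is bordered by those of $e_{3j-2}$ (present iff $j\ge 2$), $e_{3j-3}$, $e_{3j+1}$ (present iff $j\le n-1$). A mountain–valley (MV) assignment is a map $\mu$ from the creases to $\{1,-1\}$ ($1$ = mountain $M$, $-1$ = valley $V$). It is locally valid if for every $k=1,\dots,n-1$ exactly one of $\mu(e_{3k-1}),\mu(e_{3k}),\mu(e_{3k+1})$ differs from $\mu(e_{3k-3})$ (equivalently: at each vertex three creases have one parity and one the other, and the minority crease is not the one between the two obtuse angles). The face flip of $\alpha$ turns $\mu$ into $\mu_\alpha$,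 which negates $\mu$ on the creases bordering $\alpha$ and agrees with $\mu$ elsewhere; $\alpha$ is flippable under $\mu$ if both $\mu$ and $\mu_\alpha$ are locally valid. ${\rm OFG}(M_{2,n})$ is the graph whose vertices are the locally valid MV assignments of $M_{2,n}$, with $\mu\sim\mu_\alpha$ whenever $\alpha$ is flippable under $\mu$. *)

(* Defs.v *)
From mathcomp Require Import all_boot.
Set Implicit Arguments. Unset Strict Implicit. Unset Printing Implicit Defensive.

(* Creases of M_{2,n}: e_c for c in {0} U {2,...,3n-2}.  We index them by
   naturals c < 3n-1 with c <> 1. *)
Definition crease (n : nat) := {c : 'I_(3 * n - 1) | val c != 1}.

(* An MV assignment: a map from creases to {1,-1}; coded as booleans,
   true = 1 = mountain M, false = -1 = valley V. *)
Definition mvassign (n : nat) := {ffun crease n -> bool}.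

(* value of mu at the crease e_c (c a crease index); [false] if there is no
   crease e_c, which never happens at the indices used below. *)
Definition mu_at (n : nat) (mu : mvassign n) (c : nat) : bool :=
  if [pick e : crease n | val (val e) == c] is Some e then mu e else false.

Definition locally_valid (n : nat) (mu : mvassign n) : bool :=
  [forall k : 'I_n, (0 < k) ==>
     (count (fun c => mu_at mu c != mu_at mu (3 * k - 3))
        [:: 3 * k - 1; 3 * k; 3 * k + 1] == 1)].

Definition face_border (n i j c : nat) : bool :=
  if i == 1 then
    [|| (2 <= j) && (c == 3 * j - 4), c == 3 * j - 3 | (j <= n - 1) && (c == 3 * j - 1)]
  else
    [|| (2 <= j) && (c == 3 * j - 2), c == 3 * j - 3 | (j <= n - 1) && (c == 3 * j + 1)].

Definition face_flip (n i j : nat) (mu : mvassign n) : mvassign n :=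
  [ffun e : crease n => if face_border n i j (val (val e)) then ~~ mu e else mu e].

Definition OFG_vertices (n : nat) : {set mvassign n} :=
  [set mu | locally_valid mu].

Definition OFG_edge (n : nat) : rel (mvassign n) :=
  fun mu nu =>
    locally_valid mu &&
    [exists i : 'I_2, exists j : 'I_n,
       let mu' := face_flip i.+1 j.+1 mu in locally_valid mu' && (nu == mu')].

(* Main.v *)
Require Import Defs.
From mathcomp Require Import all_boot.
From mathcomp Require Import zify.
Set Implicit Arguments. Unset Strict Implicit.

Definition condL (L : seq bool) (k : nat) : bool :=
  count (fun c => nth false L (c - 1) != nth false L (3 * k - 3 - 1))
    [:: 3 * k - 1; 3 * k; 3 * k + 1] == 1.
Definition VL (n : nat) (L : seq bool) : bool := all (condL L) (iota 1 n.-1).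
Definition idx (p : nat) : nat := if p == 0 then 0 else p.+1.
Definition enc (n : nat) (mu : mvassign n) : seq bool :=
  mkseq (fun p => mu_at mu (idx p)) (3 * n - 2).
Definition dec (n : nat) (s : seq bool) : mvassign n :=
  [ffun e : crease n => nth false s (val (val e) - 1)].

Lemma mu_atE n (mu : mvassign n) (e : crease n) : mu_at mu (val (val e)) = mu e.
Proof.
rewrite /mu_at; case: pickP => [e' /eqP H | H].
  by have -> : e' = e by apply: val_inj; apply: val_inj.
by have := H e; rewrite eqxx.
Qed.

Lemma crease_ex n c : c < 3 * n - 1 -> c != 1 -> exists e : crease n, val (val e) = c.
Proof. move=> h1 h2. by exists (exist _ (Ordinal h1) h2). Qed.

Lemma mu_at_nth n (mu : mvassign n) c : c < 3 * n - 1 -> c != 1 ->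
  nth false (enc mu) (c - 1) = mu_at mu c.
Proof.
move=> h1 h2; rewrite nth_mkseq; last by lia.
congr (mu_at mu _); rewrite /idx; case: c h1 h2 => [|[|c]] //.
Qed.

Lemma condL_mu n (mu : mvassign n) k : 0 < k < n ->
  condL (enc mu) k = (count (fun c => mu_at mu c != mu_at mu (3 * k - 3))
        [:: 3 * k - 1; 3 * k; 3 * k + 1] == 1).
Proof.
move=> /andP[k1 k2]; rewrite /condL; congr (_ == 1); apply: eq_in_count => c.
rewrite !inE => Hc.
have Hc' : c < 3 * n - 1 /\ c != 1 by case/or3P: Hc => /eqP ->; lia.
case: Hc' => Hc1 Hc2.
rewrite !mu_at_nth //; lia.
Qed.

Lemma lv_enc n (mu : mvassign n) : locally_valid mu = VL n (enc mu).
Proof.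
apply/forallP/allP.
  move=> H k; rewrite mem_iota => /andP[k1 k2].
  have kn : k < n by lia.
  have := H (Ordinal kn); rewrite /= k1 /= => H'.
  by rewrite condL_mu ?k1 //=.
move=> H k; apply/implyP => k1.
have := H k; rewrite mem_iota condL_mu ?k1 ?ltn_ord //; apply.
have := ltn_ord k; lia.
Qed.

Lemma enc_inj n : injective (@enc n).
Proof.
move=> mu nu H; apply/ffunP => e.
have h1 := ltn_ord (val e); have h2 := valP e.
by rewrite -!mu_atE -!mu_at_nth // H.
Qed.

Lemma enc_dec n s : size s = 3 * n - 2 -> enc (dec n s) = s.
Proof.
move=> hs; apply: (@eq_from_nth _ false); first by rewrite size_mkseq hs.
move=> p; rewrite size_mkseq => hp; rewrite nth_mkseq //.
have [e He] : exists e : crease n, val (val e) = idx p.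
  by apply: crease_ex; rewrite /idx; case: p hp => [|p] /=; lia.
by rewrite -He mu_atE ffunE He /idx; case: p {hp He} => [|p] //=; rewrite subn1.
Qed.

Fixpoint allseqs m : seq (seq bool) :=
  if m is m'.+1 then [seq rcons s true | s <- allseqs m'] ++ [seq rcons s false | s <- allseqs m']
  else [:: [::]].

Lemma mem_allseqs m s : (s \in allseqs m) = (size s == m).
Proof.
elim: m s => [|m IH] s.
  by case: s.
case/lastP: s => [|s x] /=.
  apply/negP; rewrite mem_cat => /orP[]/mapP[s' _]; by case: s'.
rewrite size_rcons eqSS -IH mem_cat.
case: x; rewrite (mem_map (@rcons_injl _ _)).
  suff -> : (rcons s true \in [seq rcons s0 false | s0 <- allseqs m]) = false by rewrite orbF.
  by apply/negP => /mapP[s' _ /eqP]; rewrite eqseq_rcons andbF.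
suff -> : (rcons s false \in [seq rcons s0 true | s0 <- allseqs m]) = false by [].
by apply/negP => /mapP[s' _ /eqP]; rewrite eqseq_rcons andbF.
Qed.

Lemma uniq_allseqs m : uniq (allseqs m).
Proof.
elim: m => [|m IH] //=.
rewrite cat_uniq !(map_inj_uniq (@rcons_injl _ _)) IH /= andbT.
apply/hasP => [[y /mapP[s1 _ ->] /mapP[s2 _ /eqP]]].
by rewrite eqseq_rcons andbF.
Qed.

Definition sum8 (Q : bool -> bool -> bool -> pred (seq bool)) (l : seq (seq bool)) :=
  count (Q true true true) l + count (Q false true true) l +
  count (Q true false true) l + count (Q false false true) l +
  count (Q true true false) l + count (Q false true false) l +
  count (Q true false false) l + count (Q false false false) l.

Lemma count3 (P : pred (seq bool)) x :
  count P (allseqs x.+3) = sum8 (fun t r b s => P (rcons (rcons (rcons s t) r) b)) (allseqs x).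
Proof.
rewrite /= !(count_cat, count_map) /sum8 -!addnA; reflexivity.
Qed.
Definition cnt3 (x t r b : bool) := count (fun y => y != x) [:: t; r; b] == 1.

Lemma sum8_eq (Q : bool -> bool -> bool -> pred (seq bool)) (V : pred (seq bool))
  (xf : seq bool -> bool) l :
  (forall s, s \in l -> forall t r b, Q t r b s = V s && cnt3 (xf s) t r b) ->
  sum8 Q l = 3 * count V l.
Proof.
elim: l => [|s l IH] H //=.
have := IH (fun s' hs' => H s' (@mem_behead _ (s :: l) s' hs')).
rewrite /sum8 /= !H ?mem_head //.
case: (V s); case: (xf s); rewrite /cnt3 /=; lia.
Qed.

Lemma nthR s t r b i : i < size s ->
  nth false (rcons (rcons (rcons s t) r) b) i = nth false s i.
Proof. move=> h; rewrite !nth_rcons !size_rcons h. have -> : i < (size s).+1 by lia.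
have -> : i < (size s).+2 by lia. by []. Qed.

Lemma key m s t r b : size s = 3 * m + 1 ->
  VL m.+2 (rcons (rcons (rcons s t) r) b) = VL m.+1 s && cnt3 (nth false s (3 * m - 1)) t r b.
Proof.
move=> hs; rewrite /VL; have -> : m.+2.-1 = m + 1 by rewrite addn1.
rewrite iotaD all_cat /= andbT.
congr (_ && _).
  apply: eq_in_all => k; rewrite mem_iota => /andP[k1 k2].
  rewrite /condL /=. rewrite !nthR //; lia.
rewrite /condL /cnt3 /=.
have -> : 3 * (1 + m) - 1 - 1 = size s by lia.
have -> : 3 * (1 + m) - 1 = (size s).+1 by lia.
have -> : 3 * (1 + m) + 1 - 1 = (size s).+2 by lia.
rewrite (@nthR s t r b (3 * (1 + m) - 3 - 1)); last by lia.
have -> : 3 * (1 + m) - 3 - 1 = 3 * m - 1 by lia.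
rewrite !nth_rcons !size_rcons.
move: (size s) => k.
have e1 : k < k.+2 by lia. have e2 : k < k.+1 by lia. have e3 : k.+1 < k.+2 by lia.
have f1 : (k.+2 < k.+2) = false by lia. have f2 : (k.+1 < k.+1) = false by lia. have f3 : (k < k) = false by lia.
by rewrite e1 e2 e3 f1 f2 f3 !eqxx.
Qed.

Lemma countVL m : count (VL m.+1) (allseqs (3 * m + 1)) = 2 * 3 ^ m.
Proof.
elim: m => [|m IH]; first by [].
have -> : 3 * m.+1 + 1 = (3 * m + 1).+3 by lia.
rewrite count3 (@sum8_eq _ (VL m.+1) (fun s => nth false s (3 * m - 1))).
  by rewrite IH expnS; lia.
move=> s; rewrite mem_allseqs => /eqP hs t r b.
by rewrite key.
Qed.

Theorem theorem3p1 (n : nat) : 1 <= n -> #|OFG_vertices n| = 2 * 3 ^ (n - 1).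
Proof.
move=> hn.
have -> : #|OFG_vertices n| = count (VL n) (allseqs (3 * n - 2)).
  rewrite cardE -(size_map (@enc n)) -size_filter; apply: perm_size.
  apply: uniq_perm.
  - by rewrite (map_inj_uniq (@enc_inj n)) enum_uniq.
  - by rewrite filter_uniq // uniq_allseqs.
  move=> s; rewrite mem_filter mem_allseqs.
  apply/mapP/andP.
    move=> [mu]; rewrite mem_enum inE lv_enc => hv ->.
    by rewrite hv size_mkseq.
  move=> [hv /eqP hs]; exists (dec n s); last by rewrite enc_dec.
  by rewrite mem_enum inE lv_enc enc_dec.
case: n hn => [|m] // _.
have -> : 3 * m.+1 - 2 = 3 * m + 1 by lia.
by rewrite countVL subn1.
Qed.
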